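(* For $n=3$, at every point of $\mathbb C_3$ one has $\mathcal D_3+[\mathcal D_3,\mathcal D_3]=T\mathbb C_3$. More precisely, $\xi_1,\xi_2,\xi_3,[\xi_1,\xi_2],[\xi_2,\xi_3]$ span the $5$-dimensional tangent space of $\mathbb C_3$ at every point; so $\mathcal D_3$ has growth vector $(3,5)$ everywhere.
   Context: $\mathcal P_3$ is the $6$-dimensional manifold of (nondegenerate) triangles in $\mathbb R^2$. A triangle is encoded by its counterclockwise-ordered side lines $L_i=\{x\cos\alpha_i+y\sin\alpha_i=p_i\}$, $i\in\mathbb Z/3$, with $(\cos\alpha_i,\sin\alpha_i)$ the outer unit normal. For each $i$, let $C_i$ be the tangency point with $L_i$ of the excircle of the triangle opposite to the side on $L_i$. This is the circle tangent to the three lines lying on the triangle's side of $L_{i\pm1}$ and on the opposite side of $L_i$. $\xi_i$ is the vector field given by the infinitesimal counterclockwise rotation of $L_i$ about $C_i$, other sides fixed. In coordinates $\xi_i=\partial_{\alpha_i}+\Phi_i\partial_{p_i}$ with $$\Phi_i=\frac{\cos^2\!\big(\frac{\alpha_i-\alpha_{i-1}}2\big)(p_{i+1}+p_i)-\cos^2\!\big(\frac{\alpha_{i+1}-\alpha_i}2\big)(p_{i-1}+p_i)}{2\sin\!\big(\frac{\alpha_{i+1}-\alpha_{i-1}}2\big)\cos\!\big(\frac{\alpha_i-\alpha_{i-1}}2\big)\cos\!\big(\frac{\alpha_{i+1}-\alpha_i}2\big)}.$$ $\mathcal D_3=\mathrm{span}(\xi_1,\xi_2,\xi_3)$ is tangent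 to the level sets of the perimeter. $\mathbb C_3$ is a level set of the perimeter (triangles of a fixed perimeter), a $5$-dimensional manifold. *)

(* Defs.v *)
From Stdlib Require Import Reals Lra Arith.
From Coquelicot Require Import Coquelicot.
Open Scope R_scope.

(* A point of R^6 (coordinates alpha_1,alpha_2,alpha_3,p_1,p_2,p_3 stored at
   indices 0,1,2,3,4,5; other indices are irrelevant).  Side index i is taken
   mod 3 (i = 0,1,2 corresponds to the paper's 1,2,3). *)
Definition pt := nat -> R.

Definition al (x : pt) (i : nat) : R := x (i mod 3)%nat.
Definition pp (x : pt) (i : nat) : R := x (3 + i mod 3)%nat.

(* The manifold P_3 of nondegenerate triangles: the outer normals are in
   counterclockwise order with consecutive angular gaps in (0,pi), and the
   triangle { z | <z, n_i> <= p_i for all i } has nonempty interior. *)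
Definition in_P3 (x : pt) : Prop :=
  sin (al x 1 - al x 0) > 0 /\ sin (al x 2 - al x 1) > 0 /\
  sin (al x 0 - al x 2) > 0 /\
  exists u v : R, forall i : nat, (i < 3)%nat ->
    u * cos (al x i) + v * sin (al x i) < pp x i.

(* Vertex L_i ∩ L_{i+1} (Cramer's rule). *)
Definition vtx_x (x : pt) (i : nat) : R :=
  (pp x i * sin (al x (i+1)) - pp x (i+1) * sin (al x i)) / sin (al x (i+1) - al x i).
Definition vtx_y (x : pt) (i : nat) : R :=
  (cos (al x i) * pp x (i+1) - cos (al x (i+1)) * pp x i) / sin (al x (i+1) - al x i).

(* Perimeter: sum of the lengths of the three sides; the side on L_{i+1}
   joins vertex L_i ∩ L_{i+1} to vertex L_{i+1} ∩ L_{i+2}. *)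
Definition perimeter (x : pt) : R :=
  sum_f_R0 (fun i => sqrt ((vtx_x x (i+1) - vtx_x x i)^2 + (vtx_y x (i+1) - vtx_y x i)^2)) 2.

Definition Phi (i : nat) (x : pt) : R :=
  let a := al x i in let am := al x (i+2) in let ap := al x (i+1) in
  let p := pp x i in let pm := pp x (i+2) in let pn := pp x (i+1) in
  ((cos ((a - am)/2))^2 * (pn + p) - (cos ((ap - a)/2))^2 * (pm + p)) /
  (2 * sin ((ap - am)/2) * cos ((a - am)/2) * cos ((ap - a)/2)).

Definition vfield := pt -> pt.

Definition xi (i : nat) : vfield := fun x k =>
  if Nat.eqb k i then 1 else if Nat.eqb k (3 + i) then Phi i x else 0.

Definition dirD (f : pt -> R) (x v : pt) : R :=
  Derive (fun t => f (fun k => x k + t * v k)) 0.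

Definition bracket (X Y : vfield) : vfield := fun x k =>
  dirD (fun y => Y y k) x (X x) - dirD (fun y => X y k) x (Y x).

Definition gen (j : nat) : vfield :=
  match j with
  | 0 => xi 0 | 1 => xi 1 | 2 => xi 2
  | 3 => bracket (xi 0) (xi 1)
  | _ => bracket (xi 1) (xi 2)
  end.

(* Main.v *)
Require Import Defs.
From Stdlib Require Import Reals.
From Coquelicot Require Import Coquelicot.
From Stdlib Require Import Lra Lia Field.
Open Scope R_scope.
Lemma loc_pos (f : R -> R) (x : R) : ex_derive f x -> 0 < f x -> locally x (fun t => 0 < f t).
Proof.
  intros Hd Hp. apply ex_derive_continuous in Hd.
  apply Hd. exists (mkposreal _ Hp). intros y Hy.
  apply Rabs_lt_between' in Hy. simpl in Hy. lra.
Qed.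
Lemma loc_nz (f : R -> R) (x : R) : ex_derive f x -> f x <> 0 -> locally x (fun t => f t <> 0).
Proof.
  intros Hd Hp. destruct (Rlt_or_le 0 (f x)).
  - eapply filter_imp; [|apply (loc_pos f x Hd H)]. intros t Ht; simpl; lra.
  - assert (Hd' : ex_derive (fun t => - f t) x) by (exact (ex_derive_opp f x Hd)).
    assert (0 < - f x) by lra.
    eapply filter_imp; [|apply (loc_pos _ x Hd' H0)]. intros t Ht; simpl in *; lra.
Qed.
Definition PhT (Tu Tv A B : R) : R := ((1+Tv^2)*A - (1+Tu^2)*B)/(2*(Tu+Tv)).
Definition PhD (Tu Tv A B du dv dA dB : R) : R :=
 ((2*Tv*(1+Tv^2)*dv*A + (1+Tv^2)*dA - 2*Tu*(1+Tu^2)*du*B - (1+Tu^2)*dB) * (2*(Tu+Tv))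
  - ((1+Tv^2)*A - (1+Tu^2)*B) * (2*((1+Tu^2)*du + (1+Tv^2)*dv))) / (2*(Tu+Tv))^2.
Lemma tsum_nz u v : cos u <> 0 -> cos v <> 0 -> sin u / cos u + sin v / cos v <> 0 ->
  sin u * cos v + sin v * cos u <> 0.
Proof.
  intros Hu Hv H E. apply H.
  replace (sin u / cos u + sin v / cos v) with ((sin u * cos v + sin v * cos u)/(cos u * cos v)) by (field; auto).
  rewrite E. unfold Rdiv. ring.
Qed.
Lemma dPhT u du v dv A dA B dB : cos u <> 0 -> cos v <> 0 -> tan u + tan v <> 0 ->
  is_derive (fun t => PhT (tan (u + t*du)) (tan (v+t*dv)) (A + t*dA) (B + t*dB)) 0
    (PhD (tan u) (tan v) A B du dv dA dB).
Proof.
  intros Hu Hv Ht. unfold PhT, PhD, tan in *.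
  auto_derive.
  - rewrite !Rmult_0_l, !Rplus_0_r. repeat split; auto.
  - rewrite !Rmult_0_l, !Rplus_0_r. field. repeat split; auto. apply tsum_nz; auto.
Qed.
Definition Praw a am ap p pm pn := ((cos((a-am)/2))^2*(pn+p) - (cos((ap-a)/2))^2*(pm+p)) /
   (2*sin((ap-am)/2)*cos((a-am)/2)*cos((ap-a)/2)).
Lemma tan2 u : cos u <> 0 -> 1 + tan u ^2 = / (cos u)^2.
Proof. intros H. unfold tan.
  assert (E: sin u^2 + cos u^2 = 1) by (rewrite <- (sin2_cos2 u); unfold Rsqr; ring).
  replace (1 + (sin u/cos u)^2) with ((sin u ^2 + cos u^2)/cos u^2) by (field; auto).
  rewrite E. field. auto. Qed.
Lemma Praw_PhT a am ap p pm pn : cos((a-am)/2) <> 0 -> cos((ap-a)/2) <> 0 ->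
  tan((a-am)/2) + tan((ap-a)/2) <> 0 ->
  Praw a am ap p pm pn = PhT (tan((a-am)/2)) (tan((ap-a)/2)) (pn+p) (pm+p).
Proof.
  intros H1 H2 H3. unfold Praw, PhT. rewrite !tan2 by auto.
  replace ((ap-am)/2) with ((a-am)/2 + (ap-a)/2) by field.
  rewrite sin_plus. unfold tan in *.
  pose proof (tsum_nz _ _ H1 H2 H3).
  field. repeat split; auto.
Qed.
Lemma dPraw a am ap p pm pn da dam dap dp dpm dpn :
  cos((a-am)/2) <> 0 -> cos((ap-a)/2) <> 0 -> tan((a-am)/2) + tan((ap-a)/2) <> 0 ->
  is_derive (fun t => Praw (a+t*da) (am+t*dam) (ap+t*dap) (p+t*dp) (pm+t*dpm) (pn+t*dpn)) 0
    (PhD (tan((a-am)/2)) (tan((ap-a)/2)) (pn+p) (pm+p) ((da-dam)/2) ((dap-da)/2) (dpn+dp) (dpm+dp)).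
Proof.
  intros H1 H2 H3.
  set (u := (a-am)/2). set (v := (ap-a)/2).
  apply is_derive_ext_loc with (f := fun t => PhT (tan (u + t*((da-dam)/2))) (tan (v+t*((dap-da)/2)))
      ((pn+p) + t*(dpn+dp)) ((pm+p) + t*(dpm+dp))).
  2: apply dPhT; auto.
  assert (L1 : locally 0 (fun t => cos (u + t*((da-dam)/2)) <> 0)).
  { apply (loc_nz (fun t => cos (u + t*((da-dam)/2)))). auto_derive; auto.
    rewrite Rmult_0_l, Rplus_0_r; auto. }
  assert (L2 : locally 0 (fun t => cos (v + t*((dap-da)/2)) <> 0)).
  { apply (loc_nz (fun t => cos (v + t*((dap-da)/2)))). auto_derive; auto.
    rewrite Rmult_0_l, Rplus_0_r; auto. }
  assert (L3 : locally 0 (fun t => tan (u + t*((da-dam)/2)) + tan (v + t*((dap-da)/2)) <> 0)).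
  { apply (loc_nz (fun t => tan (u + t*((da-dam)/2)) + tan (v + t*((dap-da)/2)))).
    unfold tan. auto_derive. rewrite !Rmult_0_l, !Rplus_0_r; auto.
    rewrite !Rmult_0_l, !Rplus_0_r; auto. }
  generalize (filter_and _ _ L1 (filter_and _ _ L2 L3)).
  apply filter_imp. intros t [E1 [E2 E3]].
  rewrite Praw_PhT.
  - f_equal; [f_equal; unfold u; field | f_equal; unfold v; field | ring | ring].
  - replace ((a + t*da - (am + t*dam))/2) with (u + t*((da-dam)/2)) by (unfold u; field). auto.
  - replace ((ap + t*dap - (a + t*da))/2) with (v + t*((dap-da)/2)) by (unfold v; field). auto.
  - replace ((a + t*da - (am + t*dam))/2) with (u + t*((da-dam)/2)) by (unfold u; field).
    replace ((ap + t*dap - (a + t*da))/2) with (v + t*((dap-da)/2)) by (unfold v; field). auto.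
Qed.
Definition ellf A B C P Q R := (P - Q*cos(B-A))/sin(B-A) + (R - Q*cos(C-B))/sin(C-B).
Definition sidef A B C P Q R := sqrt(((Q*sin C - R*sin B)/sin(C-B) - (P*sin B - Q*sin A)/sin(B-A))^2
   + ((cos B*R - cos C*Q)/sin(C-B) - (cos A*Q - cos B*P)/sin(B-A))^2).
Lemma side_ell A B C P Q R : sin(B-A) <> 0 -> sin(C-B) <> 0 -> 0 <= ellf A B C P Q R ->
  sidef A B C P Q R = ellf A B C P Q R.
Proof.
  intros H1 H2 H3. unfold sidef.
  set (d := B - A) in *. set (e := C - B) in *.
  assert (EA : A = B - d) by (unfold d; ring).
  assert (EC : C = B + e) by (unfold e; ring).
  rewrite EA, EC, sin_minus, cos_minus, sin_plus, cos_plus.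
  replace (((Q * (sin B * cos e + cos B * sin e) - R * sin B) / sin e -
    (P * sin B - Q * (sin B * cos d - cos B * sin d)) / sin d) ^ 2 +
   ((cos B * R - (cos B * cos e - sin B * sin e) * Q) / sin e -
    ((cos B * cos d + sin B * sin d) * Q - cos B * P) / sin d) ^ 2)
  with ((ellf A B C P Q R)^2 * (sin B ^2 + cos B ^2)).
  2:{ unfold ellf. fold d e. field. auto. }
  assert (E: sin B^2 + cos B^2 = 1) by (rewrite <- (sin2_cos2 B); unfold Rsqr; ring).
  rewrite E, Rmult_1_r, <- EA, <- EC. apply sqrt_pow2; auto.
Qed.

Lemma ell_pos A B C P Q R u v : sin(B-A) > 0 -> sin(C-B) > 0 -> sin(A-C) > 0 ->
  u*cos A + v*sin A < P -> u*cos B + v*sin B < Q -> u*cos C + v*sin C < R ->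
  0 < ellf A B C P Q R.
Proof.
  intros H1 H2 H3 HP HQ HR. unfold ellf.
  set (d := B - A) in *. set (e := C - B) in *.
  assert (EA : A = B - d) by (unfold d; ring).
  assert (EC : C = B + e) by (unfold e; ring).
  assert (E3 : A - C = - (d + e)) by (unfold d, e; ring).
  rewrite E3, sin_neg, sin_plus in H3.
  rewrite EA, EC, sin_minus, cos_minus, sin_plus, cos_plus in *.
  set (qP := P - (u * (cos B * cos d + sin B * sin d) + v * (sin B * cos d - cos B * sin d))).
  set (qQ := Q - (u * cos B + v * sin B)).
  set (qR := R - (u * (cos B * cos e - sin B * sin e) + v * (sin B * cos e + cos B * sin e))).
  replace ((P - Q * cos d) / sin d + (R - Q * cos e) / sin e) with
    (qP / sin d + qR / sin e + qQ * (- (sin d * cos e + cos d * sin e)) / (sin d * sin e)).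
  2:{ unfold qP, qQ, qR. field. split; lra. }
  assert (0 < qP) by (unfold qP; lra). assert (0 < qQ) by (unfold qQ; lra).
  assert (0 < qR) by (unfold qR; lra).
  assert (0 < qP / sin d) by (apply Rdiv_lt_0_compat; lra).
  assert (0 < qR / sin e) by (apply Rdiv_lt_0_compat; lra).
  assert (0 < qQ * (- (sin d * cos e + cos d * sin e)) / (sin d * sin e)).
  { apply Rdiv_lt_0_compat. apply Rmult_lt_0_compat; lra. apply Rmult_lt_0_compat; lra. }
  lra.
Qed.
Lemma perim_sides y : perimeter y = sidef (y 0%nat) (y 1%nat) (y 2%nat) (y 3%nat) (y 4%nat) (y 5%nat)
  + sidef (y 1%nat) (y 2%nat) (y 0%nat) (y 4%nat) (y 5%nat) (y 3%nat)
  + sidef (y 2%nat) (y 0%nat) (y 1%nat) (y 5%nat) (y 3%nat) (y 4%nat).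
Proof. reflexivity. Qed.
Lemma Phi_Praw i y : Phi i y = Praw (al y i) (al y (i+2)) (al y (i+1)) (pp y i) (pp y (i+2)) (pp y (i+1)).
Proof. reflexivity. Qed.
Lemma half_id g : sin g <> 0 -> cos (g/2) <> 0 /\ sin g = 2*sin(g/2)*cos(g/2) /\ cos g = 1 - 2*sin(g/2)^2.
Proof.
  intros H. replace g with (2*(g/2)) in * by field.
  rewrite sin_2a, cos_2a_sin in *. replace (2*(g/2)/2) with (g/2) by field.
  repeat split; try ring. intro E; apply H; rewrite E; ring.
Qed.
Definition PerR (y : pt) : R := (y 3%nat + y 4%nat) * tan ((y 1%nat - y 0%nat)/2)
  + (y 4%nat + y 5%nat) * tan ((y 2%nat - y 1%nat)/2) + (y 5%nat + y 3%nat) * tan ((y 0%nat - y 2%nat)/2).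
Lemma ell_sum y : sin (y 1%nat - y 0%nat) <> 0 -> sin (y 2%nat - y 1%nat) <> 0 -> sin (y 0%nat - y 2%nat) <> 0 ->
  ellf (y 0%nat) (y 1%nat) (y 2%nat) (y 3%nat) (y 4%nat) (y 5%nat)
  + ellf (y 1%nat) (y 2%nat) (y 0%nat) (y 4%nat) (y 5%nat) (y 3%nat)
  + ellf (y 2%nat) (y 0%nat) (y 1%nat) (y 5%nat) (y 3%nat) (y 4%nat) = PerR y.
Proof.
  intros H0 H1 H2. unfold ellf, PerR, tan.
  destruct (half_id _ H0) as [C0 [S0 K0]]. destruct (half_id _ H1) as [C1 [S1 K1]].
  destruct (half_id _ H2) as [C2 [S2 K2]].
  rewrite S0, K0, S1, K1, S2, K2 in *.
  assert (sin ((y 1%nat - y 0%nat)/2) <> 0) by (intro E; apply H0; rewrite E; ring).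
  assert (sin ((y 2%nat - y 1%nat)/2) <> 0) by (intro E; apply H1; rewrite E; ring).
  assert (sin ((y 0%nat - y 2%nat)/2) <> 0) by (intro E; apply H2; rewrite E; ring).
  field. repeat split; auto.
Qed.
Definition Gf T0 T1 T2 p0 p1 p2 v0 v1 v2 v3 v4 v5 :=
  (p0+p1)*(1+T0^2)*((v1-v0)/2) + (p1+p2)*(1+T1^2)*((v2-v1)/2) + (p2+p0)*(1+T2^2)*((v0-v2)/2)
  + (v3+v4)*T0 + (v4+v5)*T1 + (v5+v3)*T2.
Definition T0 (x : pt) := tan ((x 1%nat - x 0%nat)/2).
Definition T1 (x : pt) := tan ((x 2%nat - x 1%nat)/2).
Definition T2 (x : pt) := tan ((x 0%nat - x 2%nat)/2).
Definition GX (x v : pt) := Gf (T0 x) (T1 x) (T2 x) (x 3%nat) (x 4%nat) (x 5%nat)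
  (v 0%nat) (v 1%nat) (v 2%nat) (v 3%nat) (v 4%nat) (v 5%nat).
Lemma ex_ell A B C P Q R dA dB dC dP dQ dR : sin (B-A) <> 0 -> sin (C-B) <> 0 ->
  ex_derive (fun t => ellf (A+t*dA) (B+t*dB) (C+t*dC) (P+t*dP) (Q+t*dQ) (R+t*dR)) 0.
Proof.
  intros H1 H2. unfold ellf. auto_derive. rewrite !Rmult_0_l, !Rplus_0_r. auto.
Qed.
Lemma dPerR x v : sin (x 1%nat - x 0%nat) <> 0 -> sin (x 2%nat - x 1%nat) <> 0 -> sin (x 0%nat - x 2%nat) <> 0 ->
  is_derive (fun t => PerR (fun k => x k + t * v k)) 0 (GX x v).
Proof.
  intros H0 H1 H2.
  destruct (half_id _ H0) as [C0 _]. destruct (half_id _ H1) as [C1 _].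
  destruct (half_id _ H2) as [C2 _].
  unfold PerR, GX, Gf, T0, T1, T2, tan. auto_derive.
  all: rewrite ?Rmult_0_l, ?Rplus_0_r; change ((x 1%nat + - x 0%nat) * / 2) with ((x 1%nat - x 0%nat)/2);
       change ((x 2%nat + - x 1%nat) * / 2) with ((x 2%nat - x 1%nat)/2);
       change ((x 0%nat + - x 2%nat) * / 2) with ((x 0%nat - x 2%nat)/2).
  - repeat split; auto.
  - field. repeat split; auto.
Qed.
Lemma dper x v : in_P3 x ->
  is_derive (fun t => perimeter (fun k => x k + t * v k)) 0 (GX x v).
Proof.
  intros [Hs0 [Hs1 [Hs2 [u [w Hi]]]]].
  assert (H0 : sin (x 1%nat - x 0%nat) > 0) by exact Hs0.
  assert (H1 : sin (x 2%nat - x 1%nat) > 0) by exact Hs1.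
  assert (H2 : sin (x 0%nat - x 2%nat) > 0) by exact Hs2.
  assert (I0 : u * cos (x 0%nat) + w * sin (x 0%nat) < x 3%nat) by exact (Hi 0%nat ltac:(auto)).
  assert (I1 : u * cos (x 1%nat) + w * sin (x 1%nat) < x 4%nat) by exact (Hi 1%nat ltac:(auto)).
  assert (I2 : u * cos (x 2%nat) + w * sin (x 2%nat) < x 5%nat) by exact (Hi 2%nat ltac:(auto)).
  apply is_derive_ext_loc with (f := fun t => PerR (fun k => x k + t * v k)).
  2: apply dPerR; lra.
  assert (L0 : locally 0 (fun t => 0 < sin ((x 1%nat + t * v 1%nat) - (x 0%nat + t * v 0%nat)))).
  { apply (loc_pos (fun t => sin ((x 1%nat + t * v 1%nat) - (x 0%nat + t * v 0%nat)))).
    auto_derive; auto. rewrite !Rmult_0_l, !Rplus_0_r. lra. }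
  assert (L1 : locally 0 (fun t => 0 < sin ((x 2%nat + t * v 2%nat) - (x 1%nat + t * v 1%nat)))).
  { apply (loc_pos (fun t => sin ((x 2%nat + t * v 2%nat) - (x 1%nat + t * v 1%nat)))).
    auto_derive; auto. rewrite !Rmult_0_l, !Rplus_0_r. lra. }
  assert (L2 : locally 0 (fun t => 0 < sin ((x 0%nat + t * v 0%nat) - (x 2%nat + t * v 2%nat)))).
  { apply (loc_pos (fun t => sin ((x 0%nat + t * v 0%nat) - (x 2%nat + t * v 2%nat)))).
    auto_derive; auto. rewrite !Rmult_0_l, !Rplus_0_r. lra. }
  assert (M0 : locally 0 (fun t => 0 < ellf (x 0%nat + t * v 0%nat) (x 1%nat + t * v 1%nat) (x 2%nat + t * v 2%nat)
      (x 3%nat + t * v 3%nat) (x 4%nat + t * v 4%nat) (x 5%nat + t * v 5%nat))).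
  { apply (loc_pos (fun t => ellf (x 0%nat + t * v 0%nat) (x 1%nat + t * v 1%nat) (x 2%nat + t * v 2%nat)
      (x 3%nat + t * v 3%nat) (x 4%nat + t * v 4%nat) (x 5%nat + t * v 5%nat))).
    apply ex_ell; lra. rewrite !Rmult_0_l, !Rplus_0_r. apply ell_pos with u w; lra. }
  assert (M1 : locally 0 (fun t => 0 < ellf (x 1%nat + t * v 1%nat) (x 2%nat + t * v 2%nat) (x 0%nat + t * v 0%nat)
      (x 4%nat + t * v 4%nat) (x 5%nat + t * v 5%nat) (x 3%nat + t * v 3%nat))).
  { apply (loc_pos (fun t => ellf (x 1%nat + t * v 1%nat) (x 2%nat + t * v 2%nat) (x 0%nat + t * v 0%nat)
      (x 4%nat + t * v 4%nat) (x 5%nat + t * v 5%nat) (x 3%nat + t * v 3%nat))).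
    apply ex_ell; lra. rewrite !Rmult_0_l, !Rplus_0_r. apply ell_pos with u w; lra. }
  assert (M2 : locally 0 (fun t => 0 < ellf (x 2%nat + t * v 2%nat) (x 0%nat + t * v 0%nat) (x 1%nat + t * v 1%nat)
      (x 5%nat + t * v 5%nat) (x 3%nat + t * v 3%nat) (x 4%nat + t * v 4%nat))).
  { apply (loc_pos (fun t => ellf (x 2%nat + t * v 2%nat) (x 0%nat + t * v 0%nat) (x 1%nat + t * v 1%nat)
      (x 5%nat + t * v 5%nat) (x 3%nat + t * v 3%nat) (x 4%nat + t * v 4%nat))).
    apply ex_ell; lra. rewrite !Rmult_0_l, !Rplus_0_r. apply ell_pos with u w; lra. }
  generalize (filter_and _ _ L0 (filter_and _ _ L1 (filter_and _ _ L2
     (filter_and _ _ M0 (filter_and _ _ M1 M2))))).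
  apply filter_imp. intros t [E0 [E1 [E2 [F0 [F1 F2]]]]].
  rewrite perim_sides. cbv beta.
  rewrite side_ell, side_ell, side_ell; try lra.
  symmetry. apply (ell_sum (fun k => x k + t * v k)); cbv beta; lra.
Qed.
Definition condx (x : pt) := sin (x 1%nat - x 0%nat) > 0 /\ sin (x 2%nat - x 1%nat) > 0 /\ sin (x 0%nat - x 2%nat) > 0.
Lemma tan_pos g : sin g > 0 -> tan (g/2) > 0.
Proof.
  intros H. destruct (half_id g) as [C [S _]]; [lra|]. rewrite S in H. unfold tan.
  replace (sin (g/2) / cos (g/2)) with ((2 * sin (g/2) * cos (g/2)) / (2 * cos (g/2)^2)) by (field; auto).
  apply Rdiv_lt_0_compat; auto. assert (0 < cos (g/2)^2). { apply pow2_gt_0 ; auto. } lra.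
Qed.
Lemma condx_facts x : condx x ->
  cos ((x 1%nat - x 0%nat)/2) <> 0 /\ cos ((x 2%nat - x 1%nat)/2) <> 0 /\ cos ((x 0%nat - x 2%nat)/2) <> 0 /\
  T0 x > 0 /\ T1 x > 0 /\ T2 x > 0.
Proof.
  intros [H0 [H1 H2]].
  destruct (half_id (x 1%nat - x 0%nat)) as [C0 _]; [lra|].
  destruct (half_id (x 2%nat - x 1%nat)) as [C1 _]; [lra|].
  destruct (half_id (x 0%nat - x 2%nat)) as [C2 _]; [lra|].
  unfold T0, T1, T2. repeat split; auto; apply tan_pos; auto.
Qed.
Lemma dirD_const c x v : dirD (fun _ => c) x v = 0.
Proof. unfold dirD. apply Derive_const. Qed.
Lemma dirD_Phi0 x v : condx x -> dirD (fun y => Phi 0 y) x v =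
  PhD (T2 x) (T0 x) (x 4%nat + x 3%nat) (x 5%nat + x 3%nat) ((v 0%nat - v 2%nat)/2) ((v 1%nat - v 0%nat)/2)
      (v 4%nat + v 3%nat) (v 5%nat + v 3%nat).
Proof.
  intros H. destruct (condx_facts x H) as [C0 [C1 [C2 [P0 [P1 P2]]]]].
  unfold dirD. apply is_derive_unique.
  apply (is_derive_ext (fun t => Praw (x 0%nat + t * v 0%nat) (x 2%nat + t * v 2%nat) (x 1%nat + t * v 1%nat)
      (x 3%nat + t * v 3%nat) (x 5%nat + t * v 5%nat) (x 4%nat + t * v 4%nat))).
  { intros t. reflexivity. }
  unfold T0, T2 in *. apply dPraw; auto. lra.
Qed.
Lemma dirD_Phi1 x v : condx x -> dirD (fun y => Phi 1 y) x v =
  PhD (T0 x) (T1 x) (x 5%nat + x 4%nat) (x 3%nat + x 4%nat) ((v 1%nat - v 0%nat)/2) ((v 2%nat - v 1%nat)/2)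
      (v 5%nat + v 4%nat) (v 3%nat + v 4%nat).
Proof.
  intros H. destruct (condx_facts x H) as [C0 [C1 [C2 [P0 [P1 P2]]]]].
  unfold dirD. apply is_derive_unique.
  apply (is_derive_ext (fun t => Praw (x 1%nat + t * v 1%nat) (x 0%nat + t * v 0%nat) (x 2%nat + t * v 2%nat)
      (x 4%nat + t * v 4%nat) (x 3%nat + t * v 3%nat) (x 5%nat + t * v 5%nat))).
  { intros t. reflexivity. }
  unfold T0, T1 in *. apply dPraw; auto. lra.
Qed.
Lemma dirD_Phi2 x v : condx x -> dirD (fun y => Phi 2 y) x v =
  PhD (T1 x) (T2 x) (x 3%nat + x 5%nat) (x 4%nat + x 5%nat) ((v 2%nat - v 1%nat)/2) ((v 0%nat - v 2%nat)/2)
      (v 3%nat + v 5%nat) (v 4%nat + v 5%nat).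
Proof.
  intros H. destruct (condx_facts x H) as [C0 [C1 [C2 [P0 [P1 P2]]]]].
  unfold dirD. apply is_derive_unique.
  apply (is_derive_ext (fun t => Praw (x 2%nat + t * v 2%nat) (x 1%nat + t * v 1%nat) (x 0%nat + t * v 0%nat)
      (x 5%nat + t * v 5%nat) (x 4%nat + t * v 4%nat) (x 3%nat + t * v 3%nat))).
  { intros t. reflexivity. }
  unfold T1, T2 in *. apply dPraw; auto. lra.
Qed.
Lemma Phi0_x x : condx x -> Phi 0 x = PhT (T2 x) (T0 x) (x 4%nat + x 3%nat) (x 5%nat + x 3%nat).
Proof.
  intros H. destruct (condx_facts x H) as [C0 [C1 [C2 [P0 [P1 P2]]]]].
  change (Phi 0 x) with (Praw (x 0%nat) (x 2%nat) (x 1%nat) (x 3%nat) (x 5%nat) (x 4%nat)).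
  unfold T0, T2 in *. apply Praw_PhT; auto. lra.
Qed.
Lemma Phi1_x x : condx x -> Phi 1 x = PhT (T0 x) (T1 x) (x 5%nat + x 4%nat) (x 3%nat + x 4%nat).
Proof.
  intros H. destruct (condx_facts x H) as [C0 [C1 [C2 [P0 [P1 P2]]]]].
  change (Phi 1 x) with (Praw (x 1%nat) (x 0%nat) (x 2%nat) (x 4%nat) (x 3%nat) (x 5%nat)).
  unfold T0, T1 in *. apply Praw_PhT; auto. lra.
Qed.
Lemma Phi2_x x : condx x -> Phi 2 x = PhT (T1 x) (T2 x) (x 3%nat + x 5%nat) (x 4%nat + x 5%nat).
Proof.
  intros H. destruct (condx_facts x H) as [C0 [C1 [C2 [P0 [P1 P2]]]]].
  change (Phi 2 x) with (Praw (x 2%nat) (x 1%nat) (x 0%nat) (x 5%nat) (x 4%nat) (x 3%nat)).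
  unfold T1, T2 in *. apply Praw_PhT; auto. lra.
Qed.
Section Alg.
Variables (t0 t1 t2 p0 p1 p2 : R).
Hypotheses (H0 : t0 > 0) (H1 : t1 > 0) (H01 : t0*t1 - 1 > 0) (HT : t2 = (t0+t1)/(t0*t1-1)).
Let F0 := PhT t2 t0 (p1+p0) (p2+p0).
Let F1 := PhT t0 t1 (p2+p1) (p0+p1).
Let F2 := PhT t1 t2 (p0+p2) (p1+p2).
Definition Aa := - PhD t2 t0 (p1+p0) (p2+p0) 0 (1/2) F1 0.
Definition Bb := PhD t0 t1 (p2+p1) (p0+p1) (-1/2) 0 0 F0.
Definition Bb' := - PhD t0 t1 (p2+p1) (p0+p1) 0 (1/2) F2 0.
Definition Ee := PhD t1 t2 (p0+p2) (p1+p2) (-1/2) 0 0 F1.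
Let Per := (p0+p1)*t0 + (p1+p2)*t1 + (p2+p0)*t2.
Lemma t2_pos : t2 > 0.
Proof. rewrite HT. apply Rdiv_lt_0_compat; lra. Qed.
Lemma nz_facts : t2 + t0 <> 0 /\ t0 + t1 <> 0 /\ t1 + t2 <> 0 /\ t0*t1 - 1 <> 0.
Proof. pose proof t2_pos. repeat split; lra. Qed.
Lemma G_xi0 : Gf t0 t1 t2 p0 p1 p2 1 0 0 F0 0 0 = 0.
Proof. destruct nz_facts as [A [B [C D]]]. unfold Gf, F0, PhT. field. auto. Qed.
Lemma G_xi1 : Gf t0 t1 t2 p0 p1 p2 0 1 0 0 F1 0 = 0.
Proof. destruct nz_facts as [A [B [C D]]]. unfold Gf, F1, PhT. field. auto. Qed.
Lemma G_xi2 : Gf t0 t1 t2 p0 p1 p2 0 0 1 0 0 F2 = 0.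
Proof. destruct nz_facts as [A [B [C D]]]. unfold Gf, F2, PhT. field. auto. Qed.
Lemma G_g3 : Gf t0 t1 t2 p0 p1 p2 0 0 0 Aa Bb 0 = 0.
Proof.
  destruct nz_facts as [A [B [C D]]]. unfold Gf, Aa, Bb, F0, F1, PhT, PhD.
  subst t2. field. repeat split; auto. nra.
Qed.
Lemma G_g4 : Gf t0 t1 t2 p0 p1 p2 0 0 0 0 Bb' Ee = 0.
Proof.
  destruct nz_facts as [A [B [C D]]]. unfold Gf, Bb', Ee, F1, F2, PhT, PhD.
  subst t2. field. repeat split; auto. nra.
Qed.
Lemma Aa_val : Aa = -(1+t0^2)*(1+t1^2)*(1+t2^2)*Per/(4*(t2+t0)^2*(t0+t1)*(t1*t2-1)).
Proof.
  destruct nz_facts as [A [B [C D]]]. unfold Aa, Per, F1, PhT, PhD.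
  subst t2. field. repeat split; auto; nra.
Qed.
Lemma Ee_val : Ee = (1+t0^2)*(1+t1^2)*(1+t2^2)*Per/(4*(t0+t1)*(t1+t2)^2*(t2*t0-1)).
Proof.
  destruct nz_facts as [A [B [C D]]]. unfold Ee, Per, F1, PhT, PhD.
  subst t2. field. repeat split; auto; nra.
Qed.
Lemma prod_facts : t1*t2 - 1 > 0 /\ t2*t0 - 1 > 0.
Proof.
  assert (E1 : t1*t2 - 1 = (1 + t1^2)/(t0*t1-1)) by (rewrite HT; field; lra).
  assert (E2 : t2*t0 - 1 = (1 + t0^2)/(t0*t1-1)) by (rewrite HT; field; lra).
  rewrite E1, E2. split; apply Rdiv_lt_0_compat; nra.
Qed.
Lemma Aa_nz : Per > 0 -> Aa <> 0.
Proof.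
  intros HP. rewrite Aa_val. pose proof t2_pos. destruct prod_facts.
  assert (0 < (1+t0^2)*(1+t1^2)*(1+t2^2)*Per/(4*(t2+t0)^2*(t0+t1)*(t1*t2-1))).
  { apply Rdiv_lt_0_compat.
    - repeat apply Rmult_lt_0_compat; nra.
    - repeat apply Rmult_lt_0_compat; nra. }
  unfold Rdiv in *. lra.
Qed.
Lemma Ee_nz : Per > 0 -> Ee <> 0.
Proof.
  intros HP. rewrite Ee_val. pose proof t2_pos. destruct prod_facts.
  assert (0 < (1+t0^2)*(1+t1^2)*(1+t2^2)*Per/(4*(t0+t1)*(t1+t2)^2*(t2*t0-1))).
  { apply Rdiv_lt_0_compat.
    - repeat apply Rmult_lt_0_compat; nra.
    - repeat apply Rmult_lt_0_compat; nra. }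
  lra.
Qed.
End Alg.
Lemma gen3_tab x : condx x ->
  gen 3 x 0%nat = 0 /\ gen 3 x 1%nat = 0 /\ gen 3 x 2%nat = 0 /\
  gen 3 x 3%nat = Aa (T0 x) (T1 x) (T2 x) (x 3%nat) (x 4%nat) (x 5%nat) /\
  gen 3 x 4%nat = Bb (T0 x) (T1 x) (T2 x) (x 3%nat) (x 4%nat) (x 5%nat) /\
  gen 3 x 5%nat = 0.
Proof.
  intros H. unfold gen, bracket.
  cbn [xi Nat.eqb Nat.add].
  rewrite !dirD_const.
  rewrite dirD_Phi0, dirD_Phi1 by exact H.
  cbn [xi Nat.eqb Nat.add].
  rewrite Phi0_x, Phi1_x by exact H.
  unfold Aa, Bb.
  repeat split; try ring.
  - rewrite Rminus_0_l. f_equal. f_equal; first [field | ring].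
  - rewrite Rminus_0_r. f_equal; first [field | ring].
Qed.
Lemma gen4_tab x : condx x ->
  gen 4 x 0%nat = 0 /\ gen 4 x 1%nat = 0 /\ gen 4 x 2%nat = 0 /\ gen 4 x 3%nat = 0 /\
  gen 4 x 4%nat = Bb' (T0 x) (T1 x) (T2 x) (x 3%nat) (x 4%nat) (x 5%nat) /\
  gen 4 x 5%nat = Ee (T0 x) (T1 x) (T2 x) (x 3%nat) (x 4%nat) (x 5%nat).
Proof.
  intros H. unfold gen, bracket.
  cbn [xi Nat.eqb Nat.add].
  rewrite !dirD_const.
  rewrite dirD_Phi1, dirD_Phi2 by exact H.
  cbn [xi Nat.eqb Nat.add].
  rewrite Phi1_x, Phi2_x by exact H.
  unfold Bb', Ee.
  repeat split; try ring.
  - rewrite Rminus_0_l. f_equal. f_equal; first [field | ring].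
  - rewrite Rminus_0_r. f_equal; first [field | ring].
Qed.
Lemma gen0_tab x : condx x ->
  gen 0 x 0%nat = 1 /\ gen 0 x 1%nat = 0 /\ gen 0 x 2%nat = 0 /\
  gen 0 x 3%nat = PhT (T2 x) (T0 x) (x 4%nat + x 3%nat) (x 5%nat + x 3%nat) /\
  gen 0 x 4%nat = 0 /\ gen 0 x 5%nat = 0.
Proof.
  intros H. unfold gen. cbn [xi Nat.eqb Nat.add]. rewrite Phi0_x by exact H. repeat split.
Qed.
Lemma gen1_tab x : condx x ->
  gen 1 x 0%nat = 0 /\ gen 1 x 1%nat = 1 /\ gen 1 x 2%nat = 0 /\ gen 1 x 3%nat = 0 /\
  gen 1 x 4%nat = PhT (T0 x) (T1 x) (x 5%nat + x 4%nat) (x 3%nat + x 4%nat) /\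
  gen 1 x 5%nat = 0.
Proof.
  intros H. unfold gen. cbn [xi Nat.eqb Nat.add]. rewrite Phi1_x by exact H. repeat split.
Qed.
Lemma gen2_tab x : condx x ->
  gen 2 x 0%nat = 0 /\ gen 2 x 1%nat = 0 /\ gen 2 x 2%nat = 1 /\ gen 2 x 3%nat = 0 /\
  gen 2 x 4%nat = 0 /\
  gen 2 x 5%nat = PhT (T1 x) (T2 x) (x 3%nat + x 5%nat) (x 4%nat + x 5%nat).
Proof.
  intros H. unfold gen. cbn [xi Nat.eqb Nat.add]. rewrite Phi2_x by exact H. repeat split.
Qed.
Lemma constr x : condx x -> T0 x * T1 x - 1 > 0 /\ T2 x = (T0 x + T1 x)/(T0 x * T1 x - 1).
Proof.
  intros H. destruct (condx_facts x H) as [C0 [C1 [C2 [P0 [P1 P2]]]]].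
  unfold T0, T1, T2, tan in *.
  set (a := (x 1%nat - x 0%nat)/2) in *. set (b := (x 2%nat - x 1%nat)/2) in *.
  assert (E : (x 0%nat - x 2%nat)/2 = - (a + b)) by (unfold a, b; field).
  rewrite E in *. rewrite sin_neg, cos_neg, sin_plus, cos_plus in *.
  assert (D : cos a * cos b - sin a * sin b <> 0) by exact C2.
  assert (D' : sin a / cos a * (sin b / cos b) - 1 <> 0).
  { intro Z. apply D. replace (cos a * cos b - sin a * sin b) with
      (- (cos a * cos b) * (sin a / cos a * (sin b / cos b) - 1)) by (field; auto).
    rewrite Z. ring. }
  assert (EQ : - (sin a * cos b + cos a * sin b) / (cos a * cos b - sin a * sin b) =
     (sin a / cos a + sin b / cos b) / (sin a / cos a * (sin b / cos b) - 1)).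
  { field. repeat split; auto. intro Z; apply D; lra. }
  split; [|exact EQ].
  rewrite EQ in P2.
  destruct (Rlt_or_le 0 (sin a / cos a * (sin b / cos b) - 1)) as [L|L]; auto.
  exfalso. assert (L2 : sin a / cos a * (sin b / cos b) - 1 < 0) by lra.
  assert (0 < (sin a / cos a + sin b / cos b) / - (sin a / cos a * (sin b / cos b) - 1)).
  { apply Rdiv_lt_0_compat; lra. }
  assert (Q: (sin a / cos a + sin b / cos b) / - (sin a / cos a * (sin b / cos b) - 1) =
    - ((sin a / cos a + sin b / cos b) / (sin a / cos a * (sin b / cos b) - 1))) by (field; repeat split; try lra; auto).
  lra.
Qed.
Lemma lin_solve W0 W1 W2 a b b' e r0 r1 r2 : a <> 0 -> e <> 0 -> W1 <> 0 ->
  W0*a + W1*b = 0 -> W1*b' + W2*e = 0 -> W0*r0 + W1*r1 + W2*r2 = 0 ->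
  r1 = b*(r0/a) + b'*(r2/e).
Proof.
  intros Ha He HW E1 E2 E3.
  assert (Hb : b = -(W0*a)/W1) by (apply (Rmult_eq_reg_l W1); [|auto]; field_simplify; auto; lra).
  assert (Hb' : b' = -(W2*e)/W1) by (apply (Rmult_eq_reg_l W1); [|auto]; field_simplify; auto; lra).
  rewrite Hb, Hb'. apply (Rmult_eq_reg_l W1); auto.
  replace (W1*r1) with (-(W0*r0) - W2*r2) by lra. field. repeat split; auto.
Qed.
Lemma in_condx x : in_P3 x -> condx x.
Proof. intros [H0 [H1 [H2 _]]]. split; [exact H0|split; [exact H1|exact H2]]. Qed.
Lemma Per_pos x : in_P3 x ->
  (x 3%nat + x 4%nat) * T0 x + (x 4%nat + x 5%nat) * T1 x + (x 5%nat + x 3%nat) * T2 x > 0.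
Proof.
  intros [Hs0 [Hs1 [Hs2 [u [w Hi]]]]].
  assert (H0 : sin (x 1%nat - x 0%nat) > 0) by exact Hs0.
  assert (H1 : sin (x 2%nat - x 1%nat) > 0) by exact Hs1.
  assert (H2 : sin (x 0%nat - x 2%nat) > 0) by exact Hs2.
  assert (I0 : u * cos (x 0%nat) + w * sin (x 0%nat) < x 3%nat) by exact (Hi 0%nat ltac:(auto)).
  assert (I1 : u * cos (x 1%nat) + w * sin (x 1%nat) < x 4%nat) by exact (Hi 1%nat ltac:(auto)).
  assert (I2 : u * cos (x 2%nat) + w * sin (x 2%nat) < x 5%nat) by exact (Hi 2%nat ltac:(auto)).
  change ((x 3%nat + x 4%nat) * T0 x + (x 4%nat + x 5%nat) * T1 x + (x 5%nat + x 3%nat) * T2 x) with (PerR x).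
  rewrite <- ell_sum by lra.
  pose proof (ell_pos (x 0%nat) (x 1%nat) (x 2%nat) (x 3%nat) (x 4%nat) (x 5%nat) u w).
  pose proof (ell_pos (x 1%nat) (x 2%nat) (x 0%nat) (x 4%nat) (x 5%nat) (x 3%nat) u w).
  pose proof (ell_pos (x 2%nat) (x 0%nat) (x 1%nat) (x 5%nat) (x 3%nat) (x 4%nat) u w).
  assert (A1 := H ltac:(lra) ltac:(lra) ltac:(lra) ltac:(lra) ltac:(lra) ltac:(lra)).
  assert (A2 := H3 ltac:(lra) ltac:(lra) ltac:(lra) ltac:(lra) ltac:(lra) ltac:(lra)).
  assert (A3 := H4 ltac:(lra) ltac:(lra) ltac:(lra) ltac:(lra) ltac:(lra) ltac:(lra)).
  lra.
Qed.
Lemma dirD_per x v : in_P3 x -> dirD perimeter x v = GX x v.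
Proof. intros H. unfold dirD. apply is_derive_unique. apply dper. exact H. Qed.

Theorem mainTheorem12 :
  forall (L : R) (x : pt), in_P3 x -> perimeter x = L ->
    (forall c : nat -> R,
        (forall k : nat, (k < 6)%nat ->
           sum_f_R0 (fun j => c j * gen j x k) 4 = 0) ->
        forall j : nat, (j < 5)%nat -> c j = 0)
    /\ (forall j : nat, (j < 5)%nat -> dirD perimeter x (gen j x) = 0)
    /\ (forall w : pt, dirD perimeter x w = 0 ->
          exists c : nat -> R, forall k : nat, (k < 6)%nat ->
            w k = sum_f_R0 (fun j => c j * gen j x k) 4).
Proof.
  intros L x Hx _.
  pose proof (in_condx x Hx) as Hc.
  pose proof (Per_pos x Hx) as HP.
  destruct (condx_facts x Hc) as [_ [_ [_ [P0 [P1 P2]]]]].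
  destruct (constr x Hc) as [H01 HT].
  destruct (gen0_tab x Hc) as [a00 [a01 [a02 [a03 [a04 a05]]]]].
  destruct (gen1_tab x Hc) as [a10 [a11 [a12 [a13 [a14 a15]]]]].
  destruct (gen2_tab x Hc) as [a20 [a21 [a22 [a23 [a24 a25]]]]].
  destruct (gen3_tab x Hc) as [a30 [a31 [a32 [a33 [a34 a35]]]]].
  destruct (gen4_tab x Hc) as [a40 [a41 [a42 [a43 [a44 a45]]]]].
  pose proof (Aa_nz _ _ _ (x 3%nat) (x 4%nat) (x 5%nat) P0 P1 H01 HT HP) as NA.
  pose proof (Ee_nz _ _ _ (x 3%nat) (x 4%nat) (x 5%nat) P0 P1 H01 HT HP) as NE.
  split; [|split].
  - intros c Hsum.
    assert (K0 := Hsum 0%nat ltac:(lia)). assert (K1 := Hsum 1%nat ltac:(lia)).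
    assert (K2 := Hsum 2%nat ltac:(lia)). assert (K3 := Hsum 3%nat ltac:(lia)).
    assert (K5 := Hsum 5%nat ltac:(lia)).
    cbn [sum_f_R0] in K0, K1, K2, K3, K5.
    rewrite a00, a10, a20, a30, a40 in K0. rewrite a01, a11, a21, a31, a41 in K1.
    rewrite a02, a12, a22, a32, a42 in K2. rewrite a03, a13, a23, a33, a43 in K3.
    rewrite a05, a15, a25, a35, a45 in K5.
    assert (c0 : c 0%nat = 0) by lra. assert (c1 : c 1%nat = 0) by lra.
    assert (c2 : c 2%nat = 0) by lra.
    rewrite c0 in K3. rewrite c2 in K5.
    assert (c3 : c 3%nat = 0).
    { apply (Rmult_eq_reg_r (Aa (T0 x) (T1 x) (T2 x) (x 3%nat) (x 4%nat) (x 5%nat))); auto. lra. }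
    assert (c4 : c 4%nat = 0).
    { apply (Rmult_eq_reg_r (Ee (T0 x) (T1 x) (T2 x) (x 3%nat) (x 4%nat) (x 5%nat))); auto. lra. }
    intros j Hj. destruct j as [|[|[|[|[|j]]]]]; auto. lia.
  - intros j Hj. rewrite dirD_per by exact Hx. unfold GX.
    destruct j as [|[|[|[|[|j]]]]]; [| | | | | lia].
    + rewrite a00, a01, a02, a03, a04, a05. apply G_xi0; auto.
    + rewrite a10, a11, a12, a13, a14, a15. apply G_xi1; auto.
    + rewrite a20, a21, a22, a23, a24, a25. apply G_xi2; auto.
    + rewrite a30, a31, a32, a33, a34, a35. apply G_g3; auto.
    + rewrite a40, a41, a42, a43, a44, a45. apply G_g4; auto.
  - intros w Hw. rewrite dirD_per in Hw by exact Hx. unfold GX in Hw.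
    set (t0 := T0 x) in *. set (t1 := T1 x) in *. set (t2 := T2 x) in *.
    set (F0 := PhT t2 t0 (x 4%nat + x 3%nat) (x 5%nat + x 3%nat)) in *.
    set (F1 := PhT t0 t1 (x 5%nat + x 4%nat) (x 3%nat + x 4%nat)) in *.
    set (F2 := PhT t1 t2 (x 3%nat + x 5%nat) (x 4%nat + x 5%nat)) in *.
    set (A := Aa t0 t1 t2 (x 3%nat) (x 4%nat) (x 5%nat)) in *.
    set (B := Bb t0 t1 t2 (x 3%nat) (x 4%nat) (x 5%nat)) in *.
    set (B' := Bb' t0 t1 t2 (x 3%nat) (x 4%nat) (x 5%nat)) in *.
    set (E := Ee t0 t1 t2 (x 3%nat) (x 4%nat) (x 5%nat)) in *.
    set (r0 := w 3%nat - w 0%nat * F0). set (r1 := w 4%nat - w 1%nat * F1).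
    set (r2 := w 5%nat - w 2%nat * F2).
    exists (fun j => match j with 0%nat => w 0%nat | 1%nat => w 1%nat | 2%nat => w 2%nat
                      | 3%nat => r0 / A | _ => r2 / E end).
    intros k Hk. cbn [sum_f_R0].
    destruct k as [|[|[|[|[|[|k]]]]]]; [| | | | | | lia].
    + rewrite a00, a10, a20, a30, a40. ring.
    + rewrite a01, a11, a21, a31, a41. ring.
    + rewrite a02, a12, a22, a32, a42. ring.
    + rewrite a03, a13, a23, a33, a43. unfold r0. field. auto.
    + rewrite a04, a14, a24, a34, a44.
      assert (G0 := G_xi0 t0 t1 t2 (x 3%nat) (x 4%nat) (x 5%nat) P0 P1 H01 HT).
      assert (G1 := G_xi1 t0 t1 t2 (x 3%nat) (x 4%nat) (x 5%nat) P0 P1 H01 HT).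
      assert (G2 := G_xi2 t0 t1 t2 (x 3%nat) (x 4%nat) (x 5%nat) P0 P1 H01 HT).
      assert (G3 := G_g3 t0 t1 t2 (x 3%nat) (x 4%nat) (x 5%nat) P0 P1 H01 HT).
      assert (G4 := G_g4 t0 t1 t2 (x 3%nat) (x 4%nat) (x 5%nat) P0 P1 H01 HT).
      fold F0 F1 F2 A B B' E in G0, G1, G2, G3, G4.
      assert (Dec : forall v0 v1 v2 v3 v4 v5, Gf t0 t1 t2 (x 3%nat) (x 4%nat) (x 5%nat) v0 v1 v2 v3 v4 v5 =
        v0 * Gf t0 t1 t2 (x 3%nat) (x 4%nat) (x 5%nat) 1 0 0 F0 0 0
        + v1 * Gf t0 t1 t2 (x 3%nat) (x 4%nat) (x 5%nat) 0 1 0 0 F1 0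
        + v2 * Gf t0 t1 t2 (x 3%nat) (x 4%nat) (x 5%nat) 0 0 1 0 0 F2
        + (t0+t2)*(v3 - v0*F0) + (t0+t1)*(v4 - v1*F1) + (t1+t2)*(v5 - v2*F2)).
      { intros. unfold Gf. field. }
      rewrite Dec, G0, G1, G2 in Hw.
      unfold Gf in G3, G4.
      assert (t2p : t2 > 0) by (apply (t2_pos t0 t1); auto).
      assert (R1 : r1 = B*(r0/A) + B'*(r2/E)).
      { apply (lin_solve (t0+t2) (t0+t1) (t1+t2)); auto; try lra.
        unfold r0, r1, r2. lra. }
      unfold r1 in R1. lra.
    + rewrite a05, a15, a25, a35, a45. unfold r2. field. auto.
Qed.
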